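(* Let $\Gamma$ be the K3 lattice. Then the set of exceptional Kummer points is dense in $Q_\Gamma$.
   Context: The K3 lattice is $\Gamma=2(-E_8)\oplus 3U$, where $U$ is the hyperbolic plane. $Q_\Gamma=\{[x]\in\mathbb P(\Gamma_{\mathbb C}): x^2=0,\ (x+\bar x)^2>0\}$. Each $P\in Q_\Gamma$ is identified with the oriented positive plane $P\subset\Gamma_{\mathbb R}$ spanned by the real and imaginary parts of a representative. A point $P\in Q_\Gamma$ is called exceptional Kummer if the plane $P\subset\Gamma_{\mathbb R}$ is defined over $\mathbb Q$ (i.e. $P\cap\Gamma$ has rank $2$, equivalently $P\in Q_\Gamma\cap\mathbb P(\Gamma\otimes\mathbb Q(i))$) and $x^2\equiv 0 \pmod 4$ for all $x\in P\cap\Gamma$. *)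

(* Defs.v *)
From mathcomp Require Import all_boot all_order all_algebra.
From mathcomp Require Import reals.
Set Implicit Arguments. Unset Strict Implicit. Unset Printing Implicit Defensive.
Import Order.TTheory GRing.Theory Num.Theory.
Local Open Scope ring_scope.

(* Cartan matrix of E8 (positive definite), nodes 0..7:
   chain 0-1-2-3-4-5-6, node 7 attached to node 2 (Bourbaki labels 1,3,4,5,6,7,8 and 2). *)
Definition e8_adj (i j : nat) : bool :=
  [|| (i.+1 == j)%N && (j <= 6)%N, (j.+1 == i)%N && (i <= 6)%N,
      (i == 2%N) && (j == 7%N) | (i == 7%N) && (j == 2%N)].

Definition e8_entry (i j : nat) : int :=
  if (i == j)%N then 2 else if e8_adj i j then -1 else 0.

(* Gram matrix of Gamma = (-E8) + (-E8) + U + U + U on Z^22, coordinates: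
   0..7 first -E8, 8..15 second -E8, (16,17),(18,19),(20,21) the three copies of U. *)
Definition k3_entry (i j : nat) : int :=
  if (i < 8)%N && (j < 8)%N then - e8_entry i j
  else if [&& (8 <= i)%N, (i < 16)%N, (8 <= j)%N & (j < 16)%N]
       then - e8_entry (i - 8)%N (j - 8)%N
  else if (16 <= i)%N && (16 <= j)%N
       then (if ((i - 16) %/ 2 == (j - 16) %/ 2)%N && (i != j)%N then 1 else 0)
  else 0.

Definition k3_gram : 'M[int]_22 := \matrix_(i < 22, j < 22) k3_entry i j.

Definition bilZ (u v : 'rV[int]_22) : int := (u *m k3_gram *m v^T) 0 0.

Section Real.
Variable R : realType.

Definition bilR (u v : 'rV[R]_22) : R :=
  (u *m map_mx (fun z : int => z%:~R) k3_gram *m v^T) 0 0.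

Definition embZ (z : 'rV[int]_22) : 'rV[R]_22 := map_mx (fun k : int => k%:~R) z.

(* A vector x in Gamma_C = C^22 is represented as x = a + i b with a b in R^22.
   C-bilinear extension: x.y = (a.c - b.d) + i (a.d + b.c). *)
Definition cbil (x y : 'rV[R]_22 * 'rV[R]_22) : R * R :=
  (bilR x.1 y.1 - bilR x.2 y.2, bilR x.1 y.2 + bilR x.2 y.1).

Definition cconj (x : 'rV[R]_22 * 'rV[R]_22) : 'rV[R]_22 * 'rV[R]_22 := (x.1, - x.2).
Definition cadd (x y : 'rV[R]_22 * 'rV[R]_22) : 'rV[R]_22 * 'rV[R]_22 :=
  (x.1 + y.1, x.2 + y.2).

(* x (a nonzero vector of Gamma_C) represents a point of Q_Gamma:
   x^2 = 0 and (x + xbar)^2 > 0 (the latter is real and forces x <> 0). *)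
Definition in_QGamma (x : 'rV[R]_22 * 'rV[R]_22) : Prop :=
  cbil x x = (0, 0) /\
  (cbil (cadd x (cconj x)) (cadd x (cconj x))).2 = 0 /\
  0 < (cbil (cadd x (cconj x)) (cadd x (cconj x))).1.

Definition in_plane (x : 'rV[R]_22 * 'rV[R]_22) (v : 'rV[R]_22) : Prop :=
  exists s t : R, v = s *: x.1 + t *: x.2.

(* P is defined over Q: P cap Gamma has rank 2 *)
Definition plane_rational (x : 'rV[R]_22 * 'rV[R]_22) : Prop :=
  exists u v : 'rV[int]_22,
    in_plane x (embZ u) /\ in_plane x (embZ v) /\
    (forall s t : R, s *: embZ u + t *: embZ v = 0 -> s = 0 /\ t = 0).

Definition exceptional_kummer (x : 'rV[R]_22 * 'rV[R]_22) : Prop :=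
  plane_rational x /\
  (forall z : 'rV[int]_22, in_plane x (embZ z) -> (4 %| bilZ z z)%Z).

End Real.

(* Main.v *)
Require Import Defs.
From mathcomp Require Import all_boot all_order all_algebra.
From mathcomp Require Import reals.
From mathcomp Require Import ring lra zify.
Import Order.TTheory GRing.Theory Num.Theory.
Set Implicit Arguments. Unset Strict Implicit.
Local Open Scope ring_scope.

Section Bil.
Variable T : comRingType.
Variable G : 'M[T]_22.
Definition B (u v : 'rV[T]_22) : T := (u *m G *m v^T) 0 0.
Lemma BDl u1 u2 v : B (u1 + u2) v = B u1 v + B u2 v.
Proof. by rewrite /B !mulmxDl mxE. Qed.
Lemma BZl c u v : B (c *: u) v = c * B u v.
Proof. by rewrite /B -!scalemxAl mxE. Qed.
Lemma BDr u v1 v2 : B u (v1 + v2) = B u v1 + B u v2.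
Proof.
rewrite /B.
have -> : (v1 + v2)^T = v1^T + v2^T by apply/matrixP=> i j; rewrite !mxE.
by rewrite /B mulmxDr mxE.
Qed.
Lemma BZr c u v : B u (c *: v) = c * B u v.
Proof.
rewrite /B.
have -> : (c *: v)^T = c *: v^T by apply/matrixP=> i j; rewrite !mxE.
by rewrite /B -scalemxAr mxE.
Qed.
Lemma B0l v : B 0 v = 0.
Proof. by rewrite /B !mul0mx mxE. Qed.
Lemma BNl u v : B (- u) v = - B u v.
Proof. by rewrite -scaleN1r BZl mulN1r. Qed.
Lemma BNr u v : B u (- v) = - B u v.
Proof. by rewrite -scaleN1r BZr mulN1r. Qed.
Lemma BMnl u v n : B (u *+ n) v = B u v *+ n.
Proof. by rewrite -scaler_nat BZl mulr_natl. Qed.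
Lemma BMnr u v n : B u (v *+ n) = B u v *+ n.
Proof. by rewrite -scaler_nat BZr mulr_natl. Qed.
Lemma Bsym (HG : G^T = G) u v : B u v = B v u.
Proof.
rewrite /B; transitivity ((u *m G *m v^T)^T 0 0); first by rewrite [RHS]mxE.
by rewrite !trmx_mul trmxK HG mulmxA.
Qed.
Lemma Bdelta k l : B (delta_mx 0 k) (delta_mx 0 l) = G k l.
Proof. by rewrite /B -rowE trmx_delta -colE !mxE. Qed.
Lemma Bexp u v : B u v = \sum_j (\sum_i u 0 i * G i j) * v 0 j.
Proof. rewrite /B mxE; apply: eq_bigr => j _; rewrite !mxE; congr (_ * _). Qed.
End Bil.
Lemma sym_check : all (fun i => all (fun j => k3_entry i j == k3_entry j i) (iota 0 22)) (iota 0 22).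
Proof. by vm_compute. Qed.
Lemma bnd_check : all (fun i => all (fun j => `|k3_entry i j| <= 2) (iota 0 22)) (iota 0 22).
Proof. by vm_compute. Qed.

Lemma gram_sym : k3_gram^T = k3_gram.
Proof.
apply/matrixP=> i j; rewrite !mxE.
have Hi : nat_of_ord i \in iota 0 22 by rewrite mem_iota leq0n add0n ltn_ord.
have Hj : nat_of_ord j \in iota 0 22 by rewrite mem_iota leq0n add0n ltn_ord.
have H1 := seq.allP sym_check j Hj.
have H2 := seq.allP H1 i Hi.
exact/eqP/H2.
Qed.

Lemma gram_bnd (i j : 'I_22) : `|k3_gram i j| <= 2.
Proof.
rewrite !mxE.
have Hi : nat_of_ord i \in iota 0 22 by rewrite mem_iota leq0n add0n ltn_ord.
have Hj : nat_of_ord j \in iota 0 22 by rewrite mem_iota leq0n add0n ltn_ord.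
have H1 := seq.allP bnd_check i Hi.
have H2 := seq.allP H1 j Hj.
exact/H2.
Qed.

Lemma bilZE u v : bilZ u v = B k3_gram u v. Proof. by []. Qed.
Lemma bilZsym u v : bilZ u v = bilZ v u.
Proof. exact: (Bsym gram_sym). Qed.

Section RR.
Variable R : realType.
Lemma bilRE (u v : 'rV[R]_22) : bilR u v = B (map_mx (fun z : int => z%:~R) k3_gram) u v.
Proof. by []. Qed.
Lemma gramR_sym : (map_mx (fun z : int => z%:~R : R) k3_gram)^T = map_mx (fun z : int => z%:~R) k3_gram.
Proof. by rewrite map_trmx gram_sym. Qed.
Lemma bilRsym (u v : 'rV[R]_22) : bilR u v = bilR v u.
Proof. exact: (Bsym gramR_sym). Qed.
Lemma bilR_embZ u v : bilR (embZ R u) (embZ R v) = (bilZ u v)%:~R.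
Proof.
rewrite /bilR /embZ /bilZ map_trmx -!map_mxM mxE //.
Qed.

Lemma bilR_bnd (x y : 'rV[R]_22) X Y : (forall k, `|x 0 k| <= X) -> (forall k, `|y 0 k| <= Y) ->
  `|bilR x y| <= 968%:R * X * Y.
Proof.
move=> hx hy.
have X0 : 0 <= X by apply: le_trans (hx ord0).
have Y0 : 0 <= Y by apply: le_trans (hy ord0).
rewrite bilRE Bexp.
apply: le_trans (ler_norm_sum _ _ _) _.
have -> : 968%:R * X * Y = \sum_(j < 22) (44%:R * X * Y) :> R.
  by rewrite sumr_const card_ord -mulr_natl; ring.
apply: ler_sum => j _.
rewrite normrM; apply: ler_pM; [exact: normr_ge0|exact: normr_ge0| |exact: hy].
apply: le_trans (ler_norm_sum _ _ _) _.
have -> : 44%:R * X = \sum_(i < 22) (2%:R * X) :> R.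
  by rewrite sumr_const card_ord -mulr_natl; ring.
apply: ler_sum => i _.
rewrite normrM mulrC; apply: ler_pM; [exact: normr_ge0|exact: normr_ge0| |exact: hx].
rewrite mxE -intr_norm; have := gram_bnd i j; rewrite -(ler_int R); exact.
Qed.
End RR.
Lemma normM_le (R : realType) (x y X Y : R) : `|x| <= X -> `|y| <= Y -> `|x * y| <= X * Y.
Proof.
move=> hx hy; rewrite normrM; apply: ler_pM => //; exact: normr_ge0.
Qed.

Lemma core (R : realType) (c A dl et al be ga ak bk' bk : R) :
 0 < c -> 1 <= A -> 0 <= dl -> 0 <= et -> 6 * et <= c ->
 `|al - c| <= et -> `|be| <= et -> `|ga - c| <= et ->
 `|bk' - bk| <= dl -> dl <= 1 -> `|bk| <= A -> `|ak| <= 2 * A ->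
 0 < al * ga - be * be /\
 `|(al * bk' - be * ak) / Num.sqrt (al * ga - be * be) - bk| <= 2 * (et * (6 * A + 1) + c * dl) / c.
Proof.
move=> c0 A1 dl0 et0 etc hal hbe hga hb hdl hbk hak.
set d := al * ga - be * be.
have hd : `|d - c * c| <= 3 * c * et.
  have -> : d - c * c = (al - c) * (ga - c) + c * (al - c) + c * (ga - c) - be * be by rewrite /d; ring.
  apply: le_trans (ler_normB _ _) _.
  apply: le_trans (lerD (ler_normD _ _) (normM_le hbe hbe)) _.
  apply: le_trans (lerD (lerD (ler_normD _ _) (lexx _)) (lexx _)) _.
  have h1 := normM_le hal hga.
  have h2 : `|c * (al - c)| <= c * et by rewrite normrM gtr0_norm // ler_pM2l.
  have h3 : `|c * (ga - c)| <= c * et by rewrite normrM gtr0_norm // ler_pM2l.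
  nra.
have dpos : 0 < d.
  move: hd; rewrite ler_norml => /andP[hd1 _]; nra.
set s := Num.sqrt d.
have s0 : 0 <= s by exact: sqrtr_ge0.
have ss : s * s = d by rewrite -expr2 sqr_sqrtr // ltW.
have hs : `|s - c| <= 3 * et.
  have e1 : `|s - c| * (s + c) <= 3 * et * c.
    have sc0 : 0 <= s + c by lra.
    rewrite -{1}(ger0_norm sc0) -normrM.
    have -> : (s - c) * (s + c) = d - c * c by rewrite -ss; ring.
    lra.
  have e2 : `|s - c| * c <= `|s - c| * (s + c) by apply: ler_wpM2l; [exact: normr_ge0| lra].
  rewrite -(ler_pM2r c0); lra.
have sc : c / 2 <= s by move: hs; rewrite ler_norml => /andP[h _]; lra.
have spos : 0 < s by lra.
split => //.
have hbk' : `|bk'| <= A + 1.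
  have -> : bk' = (bk' - bk) + bk by ring.
  apply: le_trans (ler_normD _ _) _; lra.
have hN : `|al * bk' - be * ak - s * bk| <= et * (6 * A + 1) + c * dl.
  have -> : al * bk' - be * ak - s * bk = (al - c) * bk' + c * (bk' - bk) + (c - s) * bk - be * ak by ring.
  have t1 := normM_le hal hbk'.
  have t2 : `|c * (bk' - bk)| <= c * dl by rewrite normrM gtr0_norm // ler_pM2l.
  have hs' : `|c - s| <= 3 * et by rewrite distrC.
  have t3 := normM_le hs' hbk.
  have t4 := normM_le hbe hak.
  apply: le_trans (ler_normB _ _) _.
  apply: le_trans (lerD (ler_normD _ _) (lexx _)) _.
  apply: le_trans (lerD (lerD (ler_normD _ _) (lexx _)) (lexx _)) _.
  nra.
have -> : (al * bk' - be * ak) / s - bk = (al * bk' - be * ak - s * bk) / s by field; lra.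
rewrite normrM normfV (gtr0_norm spos).
rewrite ler_pdivrMr // mulrAC ler_pdivlMr //.
have hN0 : 0 <= `|al * bk' - be * ak - s * bk| by exact: normr_ge0.
nra.
Qed.
Lemma approx (R : realType) (r : R) (p0 : int) :
  `|((p0 + 2 * Num.floor ((r - p0%:~R) / 2))%:~R - r)| <= 2.
Proof.
set t := (r - p0%:~R) / 2.
have h1 := floor_le t; have h2 := floorD1_gt t.
rewrite intrD intrM; rewrite intrD in h2.
rewrite ler_norml; apply/andP; split; rewrite /t in h1 h2; lra.
Qed.
Lemma div4 (g S T X1 X2 X3 Z k : int) : g = 1 + 2 * k ->
  g * g * Z = S * S * (4 * X1) + 2 * S * T * (2 * X3) + T * T * (4 * X2) -> (4 %| Z)%Z.
Proof.
move=> hg h; apply/dvdzP; exists (S * S * X1 + S * T * X3 + T * T * X2 - (k + k * k) * Z).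
have e : Z = g * g * Z - 4 * (k + k * k) * Z by rewrite hg; ring.
rewrite {1}e h; ring.
Qed.
Lemma odd_ne0 (k : int) : 1 + 2 * k != 0.
Proof. apply/eqP; lia. Qed.
Section RR2.
Variable R : realType.
Implicit Types a b p q : 'rV[R]_22.

Lemma QG_inv (x : 'rV[R]_22 * 'rV[R]_22) : in_QGamma x ->
  0 < bilR x.1 x.1 /\ bilR x.1 x.2 = 0 /\ bilR x.2 x.2 = bilR x.1 x.1.
Proof.
case: x => a b [H1 [_ H3]].
rewrite /cbil /= in H1 H3; case: H1 => E1 E2.
rewrite /cadd /cconj /= subrr !bilRE B0l subr0 BDl !BDr -!bilRE in H3.
rewrite /= bilRsym in E2.
rewrite /= (bilRsym a b). split; first lra.
split; lra.
Qed.

Lemma QG_intro a b : 0 < bilR a a -> bilR a b = 0 -> bilR b b = bilR a a -> in_QGamma (a, b).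
Proof.
move=> h1 h2 h3; rewrite /in_QGamma /cbil /cadd /cconj /=.
rewrite subrr !bilRE B0l !BDl !BDr -!bilRE h3 (bilRsym b a) h2 subrr addr0.
have Z0 : forall v : 'rV[R]_22, bilR v 0 = 0 by move=> v; rewrite bilRsym bilRE B0l.
rewrite !Z0; split => //; split; first by rewrite !addr0.
lra.
Qed.
End RR2.
Section RR3.
Variable R : realType.
Implicit Types a b p q : 'rV[R]_22.
Lemma pert a b p q (A dl : R) : (forall k, `|a 0 k| <= A) -> (forall k, `|b 0 k| <= A) ->
  (forall k, `|p 0 k| <= dl) -> (forall k, `|q 0 k| <= dl) -> 0 <= dl -> dl <= 1 -> 1 <= A ->
  `|bilR (a + p) (b + q) - bilR a b| <= 2904%:R * A * dl.
Proof.
move=> ha hb hp hq dl0 dl1 A1.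
rewrite !bilRE BDl !BDr -!bilRE.
have -> : bilR a b + bilR a q + (bilR p b + bilR p q) - bilR a b = bilR a q + bilR p b + bilR p q by ring.
have h1 := bilR_bnd ha hq; have h2 := bilR_bnd hp hb; have h3 := bilR_bnd hp hq.
apply: le_trans (ler_normD _ _) _.
apply: le_trans (lerD (ler_normD _ _) (lexx _)) _.
nra.
Qed.

Lemma boundA a b : exists A : R, 1 <= A /\ (forall k, `|a 0 k| <= A) /\ (forall k, `|b 0 k| <= A).
Proof.
exists (1 + \sum_(k < 22) (`|a 0 k| + `|b 0 k|)).
have hk : forall k, `|a 0 k| + `|b 0 k| <= \sum_(k < 22) (`|a 0 k| + `|b 0 k|).
  move=> k; rewrite (bigD1 k) //=.
  have : 0 <= \sum_(i < 22 | i != k) (`|a 0 i| + `|b 0 i|) by apply: sumr_ge0 => i _; apply: addr_ge0.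
  lra.
have s0 : 0 <= \sum_(k < 22) (`|a 0 k| + `|b 0 k|) by apply: sumr_ge0 => i _; apply: addr_ge0.
split; first lra.
split=> k; have := hk k; have := normr_ge0 (a 0 k); have := normr_ge0 (b 0 k); lra.
Qed.
End RR3.

Definition i16 : 'I_22 := @Ordinal 22 16 isT.
Definition i18 : 'I_22 := @Ordinal 22 18 isT.
Definition pv : 'rV[int]_22 := delta_mx 0 i16.
Definition qv : 'rV[int]_22 := delta_mx 0 i18.
Lemma pvpv : bilZ pv pv = 0. Proof. by rewrite bilZE Bdelta mxE. Qed.
Lemma qvqv : bilZ qv qv = 0. Proof. by rewrite bilZE Bdelta mxE. Qed.
Lemma pvqv : bilZ pv qv = 0. Proof. by rewrite bilZE Bdelta mxE. Qed.
Lemma pv16 : pv 0 i16 = 1. Proof. by rewrite mxE. Qed.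
Lemma pv18 : pv 0 i18 = 0. Proof. by rewrite mxE. Qed.
Lemma qv16 : qv 0 i16 = 0. Proof. by rewrite mxE. Qed.
Lemma qv18 : qv 0 i18 = 1. Proof. by rewrite mxE. Qed.
Lemma bilZ_exp p q U V : bilZ (p + 2 *: U) (q + 2 *: V) =
  bilZ p q + 2 * (bilZ p V + bilZ U q) + 4 * bilZ U V.
Proof. rewrite !bilZE !BDl !BDr !BZl !BZr; ring. Qed.

Unset Implicit Arguments.

Theorem mainTheorem8 (R : realType) (x : 'rV[R]_22 * 'rV[R]_22) (e : R) :
  in_QGamma x -> 0 < e ->
  exists y : 'rV[R]_22 * 'rV[R]_22,
    in_QGamma y /\ exceptional_kummer y /\
    (forall i : 'I_22, `|x.1 0 i - y.1 0 i| < e /\ `|x.2 0 i - y.2 0 i| < e).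
Proof.
case: x => a b hx e0.
have [c0 [hab hbb]] := QG_inv hx; rewrite /= in c0 hab hbb.
have [A [A1 [hA hB]]] := boundA a b.
pose c := bilR a a.
rewrite -/c in c0 hbb.
pose K : R := 2904%:R * A.
have K0 : 0 < K by rewrite /K; apply: mulr_gt0 => //; lra.
pose W : R := K * (6 * A + 1) + c.
have W0 : 0 < W by rewrite /W; apply: addr_gt0 => //; apply: mulr_gt0 => //; lra.
pose dl : R := Num.min 1 (Num.min (e / 2) (Num.min (c / (6 * K)) (e * c / (4 * W)))).
have dl0 : 0 < dl.
  rewrite /dl !lt_min ltr01 /=; apply/and3P; split.
  - by apply: divr_gt0.
  - by apply: divr_gt0 => //; apply: mulr_gt0.
  - by apply: divr_gt0; apply: mulr_gt0.
have dl1 : dl <= 1 by rewrite /dl ge_min lexx.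
have dle : dl <= e / 2 by rewrite /dl ge_min ge_min lexx orbT.
have dlc : dl <= c / (6 * K) by rewrite /dl ge_min ge_min ge_min lexx !orbT.
have dlW : dl <= e * c / (4 * W) by rewrite /dl ge_min ge_min ge_min lexx !orbT.
pose Nz : int := Num.floor (2 / dl) + 1.
pose Nr : R := Nz%:~R.
have hN : 2 / dl < Nr by exact: floorD1_gt.
have Nr0 : 0 < Nr by apply: lt_trans hN; apply: divr_gt0.
have Nrdl : 2 < Nr * dl by rewrite ltr_pdivrMr // in hN.
pose Uu : 'rV[int]_22 := \row_k Num.floor ((Nr * a 0 k - (pv 0 k)%:~R) / 2).
pose Vv : 'rV[int]_22 := \row_k Num.floor ((Nr * b 0 k - (qv 0 k)%:~R) / 2).
pose u := pv + 2 *: Uu.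
pose v := qv + 2 *: Vv.
have hu : forall k, `|(u 0 k)%:~R - Nr * a 0 k| <= 2.
  by move=> k; rewrite /u !mxE; exact: approx.
have hv : forall k, `|(v 0 k)%:~R - Nr * b 0 k| <= 2.
  by move=> k; rewrite /v !mxE; exact: approx.
pose a' := Nr^-1 *: embZ R u.
pose b' := Nr^-1 *: embZ R v.
have ha' : forall k, `|(a' - a) 0 k| <= dl.
  move=> k; have -> : (a' - a) 0 k = Nr^-1 * (u 0 k)%:~R - a 0 k by rewrite !mxE.
  have -> : Nr^-1 * (u 0 k)%:~R - a 0 k = ((u 0 k)%:~R - Nr * a 0 k) / Nr by field; lra.
  rewrite normrM normfV (gtr0_norm Nr0) ler_pdivrMr //; have := hu k; lra.
have hb' : forall k, `|(b' - b) 0 k| <= dl.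
  move=> k; have -> : (b' - b) 0 k = Nr^-1 * (v 0 k)%:~R - b 0 k by rewrite !mxE.
  have -> : Nr^-1 * (v 0 k)%:~R - b 0 k = ((v 0 k)%:~R - Nr * b 0 k) / Nr by field; lra.
  rewrite normrM normfV (gtr0_norm Nr0) ler_pdivrMr //; have := hv k; lra.
have ea : a + (a' - a) = a' by rewrite addrC subrK.
have eb : b + (b' - b) = b' by rewrite addrC subrK.
pose et := K * dl.
pose al := bilR a' a'. pose be := bilR a' b'. pose ga := bilR b' b'.
have hal : `|al - c| <= et.
  by have := pert hA hA ha' ha' (ltW dl0) dl1 A1; rewrite ea.
have hbe : `|be| <= et.
  by have := pert hA hB ha' hb' (ltW dl0) dl1 A1; rewrite ea eb hab subr0.
have hga : `|ga - c| <= et.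
  by have := pert hB hB hb' hb' (ltW dl0) dl1 A1; rewrite eb hbb.
have et0 : 0 <= et by rewrite /et; apply: mulr_ge0; lra.
have et6 : 6 * et <= c.
  move: dlc; rewrite ler_pdivlMr; last by apply: mulr_gt0.
  rewrite /et; lra.
have ha'k : forall k, `|a' 0 k| <= 2 * A.
  move=> k; have h : `|a' 0 k - a 0 k| <= dl by have := ha' k; rewrite [(a' - a) 0 k]mxE [(- a) 0 k]mxE.
  have -> : a' 0 k = (a' 0 k - a 0 k) + a 0 k by ring.
  apply: le_trans (ler_normD _ _) _; have := hA k; lra.
have hb'k : forall k, `|b' 0 k - b 0 k| <= dl by move=> k; have := hb' k; rewrite [(b' - b) 0 k]mxE [(- b) 0 k]mxE.
have hcore := fun k => core c0 A1 (ltW dl0) et0 et6 hal hbe hga (hb'k k) dl1 (hB k) (ha'k k).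
have [dpos _] := hcore ord0.
pose s := Num.sqrt (al * ga - be * be).
have s0 : 0 < s by rewrite /s sqrtr_gt0.
have ss : s * s = al * ga - be * be by rewrite -expr2 sqr_sqrtr // ltW.
have al0 : 0 < al by move: hal; rewrite ler_norml => /andP[h _]; lra.
pose y2 := s^-1 *: (al *: b' - be *: a').
have Ea' : a' = Nr^-1 *: embZ R u by [].
have Eb' : b' = Nr^-1 *: embZ R v by [].
clearbody a' b'.
exists (a', y2).
have eba : bilR b' a' = be by rewrite bilRsym.
split.
  apply: QG_intro => //.
    rewrite /y2 !bilRE BZr BDr BNr !BZr -!bilRE -/al -/be.
    ring.
  rewrite /y2 !bilRE !BZl !BZr !BDl !BDr !BNl !BNr !BZl !BZr -!bilRE -/al -/be -/ga eba.
  have sn : s != 0 by rewrite gt_eqF.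
  transitivity (al * (al * ga - be * be) / (s * s)); first by field.
  rewrite ss; field; rewrite gt_eqF //.
split; last first.
  move=> i /=; split.
    have := ha' i; rewrite [(a' - a) 0 i]mxE [(- a) 0 i]mxE distrC => h.
    apply: le_lt_trans h _; lra.
  have [_ h] := hcore i.
  have -> : y2 0 i = (al * b' 0 i - be * a' 0 i) / s by rewrite /y2 !mxE; field; rewrite gt_eqF.
  rewrite distrC; apply: le_lt_trans h _.
  have -> : 2 * (et * (6 * A + 1) + c * dl) / c = dl * (2 * W / c) by rewrite /et /W; field; rewrite gt_eqF.
  move: dlW; rewrite ler_pdivlMr; last by apply: mulr_gt0.
  move=> h1.
  rewrite mulrA ltr_pdivrMr //.
  have : 0 < e * c by apply: mulr_gt0.
  lra.
have Nrn : Nr != 0 by rewrite gt_eqF.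
have sn : s != 0 by rewrite gt_eqF.
have aln : al != 0 by rewrite gt_eqF.
have hu16 : u 0 i16 = 1 + 2 * Uu 0 i16 by rewrite /u mxE [(2 *: Uu) 0 _]mxE pv16.
have hu18 : u 0 i18 = 2 * Uu 0 i18 by rewrite /u mxE [(2 *: Uu) 0 _]mxE pv18 add0r.
have hv16 : v 0 i16 = 2 * Vv 0 i16 by rewrite /v mxE [(2 *: Vv) 0 _]mxE qv16 add0r.
have hv18 : v 0 i18 = 1 + 2 * Vv 0 i18 by rewrite /v mxE [(2 *: Vv) 0 _]mxE qv18.
have huu : bilZ u u = 4 * (bilZ pv Uu + bilZ Uu Uu).
  by rewrite /u bilZ_exp pvpv (bilZsym Uu pv); ring.
have hvv : bilZ v v = 4 * (bilZ qv Vv + bilZ Vv Vv).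
  by rewrite /v bilZ_exp qvqv (bilZsym Vv qv); ring.
have huv : bilZ u v = 2 * (bilZ pv Vv + bilZ Uu qv + 2 * bilZ Uu Vv).
  by rewrite /u /v bilZ_exp pvqv; ring.
clearbody u v.
pose g : int := u 0 i16 * v 0 i18 - u 0 i18 * v 0 i16.
pose kk : int := Uu 0 i16 + Vv 0 i18 + 2 * Uu 0 i16 * Vv 0 i18 - 2 * Uu 0 i18 * Vv 0 i16.
have gk : g = 1 + 2 * kk by rewrite /g hu16 hu18 hv16 hv18 /kk; ring.
have gn : (g%:~R : R) != 0 by rewrite intr_eq0 gk odd_ne0.
split.
  exists u, v; split.
    exists Nr, 0; apply/matrixP => i j; rewrite (ord1 i) Ea' !mxE; field; rewrite sn; exact: Nrn.
  split.
    exists (Nr * be / al), (Nr * s / al); apply/matrixP => i j.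
    rewrite (ord1 i) /y2 Ea' Eb' !mxE; field; by rewrite aln sn Nrn.
  move=> s1 t1 H.
  have H16 : s1 * (u 0 i16)%:~R + t1 * (v 0 i16)%:~R = 0.
    by have := congr1 (fun M : 'rV[R]_22 => M 0 i16) H; rewrite !mxE.
  have H18 : s1 * (u 0 i18)%:~R + t1 * (v 0 i18)%:~R = 0.
    by have := congr1 (fun M : 'rV[R]_22 => M 0 i18) H; rewrite !mxE.
  have E1 : s1 * g%:~R = 0.
    rewrite /g intrB !intrM.
    have -> : s1 * ((u 0 i16)%:~R * (v 0 i18)%:~R - (u 0 i18)%:~R * (v 0 i16)%:~R) =
      (v 0 i18)%:~R * (s1 * (u 0 i16)%:~R + t1 * (v 0 i16)%:~R)
      - (v 0 i16)%:~R * (s1 * (u 0 i18)%:~R + t1 * (v 0 i18)%:~R) by ring.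
    by rewrite H16 H18; ring.
  have E2 : t1 * g%:~R = 0.
    rewrite /g intrB !intrM.
    have -> : t1 * ((u 0 i16)%:~R * (v 0 i18)%:~R - (u 0 i18)%:~R * (v 0 i16)%:~R) =
      (u 0 i16)%:~R * (s1 * (u 0 i18)%:~R + t1 * (v 0 i18)%:~R)
      - (u 0 i18)%:~R * (s1 * (u 0 i16)%:~R + t1 * (v 0 i16)%:~R) by ring.
    by rewrite H16 H18; ring.
  move/eqP: E1; rewrite mulf_eq0 (negbTE gn) orbF => /eqP ->.
  move/eqP: E2; rewrite mulf_eq0 (negbTE gn) orbF => /eqP ->.
  by [].
move=> z [s1 [t1 Hz]].
pose lam := s1 / Nr - t1 * be / (s * Nr).
pose mu := t1 * al / (s * Nr).
have hz : forall k, (z 0 k)%:~R = lam * (u 0 k)%:~R + mu * (v 0 k)%:~R.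
  move=> k; have := congr1 (fun M : 'rV[R]_22 => M 0 k) Hz.
  rewrite /= /y2 Ea' Eb' /lam /mu !mxE => ->.
  field; by rewrite sn Nrn.
pose S : int := z 0 i16 * v 0 i18 - z 0 i18 * v 0 i16.
pose T : int := u 0 i16 * z 0 i18 - u 0 i18 * z 0 i16.
have hg : forall k, g * z 0 k = S * u 0 k + T * v 0 k.
  move=> k; apply: (@intr_inj R).
  rewrite /g /S /T !intrD !intrM !intrB !intrM (hz k) (hz i16) (hz i18); ring.
have hgv : g *: z = S *: u + T *: v.
  by apply/matrixP => i j; rewrite (ord1 i) !mxE hg.
have key : g * g * bilZ z z = S * S * (4 * (bilZ pv Uu + bilZ Uu Uu))
   + 2 * S * T * (2 * (bilZ pv Vv + bilZ Uu qv + 2 * bilZ Uu Vv))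
   + T * T * (4 * (bilZ qv Vv + bilZ Vv Vv)).
  have e1 : g * g * bilZ z z = bilZ (g *: z) (g *: z) by rewrite !bilZE BZl BZr; ring.
  rewrite e1 hgv !bilZE !BDl !BDr !BZl !BZr -!bilZE (bilZsym v u) huu hvv huv; ring.
exact: div4 gk key.
Qed.
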